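(* Let $\ell, s \in \mathbb{N}$ with $1\le s \leq \ell$, let $f,\Lambda,G,R,\Omega$ be as in the context, and let $\tau \in \mathbb{N}$ with $\tau \ge \deg_{\mathcal{H}}(\Lambda)$. Define $\Lambda_i := \Lambda^{s-i}\Omega^i$ for $i=0,\dots,s-1$ and $\Psi_t := \Lambda^s f^t$ for $t=1,\dots,\ell$. Then the vector $(\Lambda_0,\dots,\Lambda_{s-1},\Psi_1,\dots,\Psi_\ell)\in\mathcal{R}^{s+\ell}$ satisfies the conditions $$\sum_{i=0}^{s-1}\Lambda_i A_{t,i} \equiv \Psi_t \mod G_t \ \ (t=1,\dots,\ell),\qquad \deg_{\mathcal{H}}(\Lambda_i)\le s\tau+i(2g-1)\ \ (i=0,\dots,s-1),\qquad \deg_{\mathcal{H}}(\Psi_t)\le s\tau+tm\ \ (t=1,\dots,\ell),$$ where the congruences are in $\mathcal{R}$ (the difference lies in the ideal $G_t\mathcal{R}$).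
   Context: Let $q$ be a prime power and $\mathbb{F}_{q^2}$ the field with $q^2$ elements. The Hermitian curve $\mathcal{H}/\mathbb{F}_{q^2}$ is the smooth projective plane curve with affine equation $Y^q+Y=X^{q+1}$; it has genus $g=\tfrac12 q(q-1)$ and $q^3+1$ rational points $P_1,\dots,P_{q^3},P_\infty$, where $P_\infty$ is the point at infinity and $P_1,\dots,P_{q^3}$ are the affine rational points. Let $\mathcal{R} = \bigcup_{m\ge 0}\mathcal{L}(mP_\infty) = \mathbb{F}_{q^2}[X,Y]/(Y^q+Y-X^{q+1})$, which has $\mathbb{F}_{q^2}$-basis $\{X^iY^j : i\ge 0,\ 0\le j<q\}$, and let $\deg_{\mathcal{H}}(h) = -v_{P_\infty}(h)$ (so $\deg_{\mathcal{H}}(X^iY^j) = iq+j(q+1)$, $\deg_{\mathcal{H}}(0)=-\infty$). Let $n=q^3$ and $m\in\mathbb{N}$ with $2(g-1)<m<n$. Let $f \in \mathcal{L}(mP_\infty)$ (so $\deg_{\mathcal{H}} f \le m$), $\mathbf{c}=(f(P_1),\dots,f(P_n))$, $\mathbf{e}\in\mathbb{F}_{q^2}^n$, received word $\mathbf{r} = \mathbf{c}+\mathbf{e}$, and error positions $\mathcal{E}=\{i : e_i\neq 0\}$. An error locator is a nonzero $\Lambda \in \mathcal{R}$ with $\Lambda(P_i)=0$ for all $i\in\mathcal{E}$; fix one. Let $R\in\mathcal{R}$ with $\deg_{\mathcal{H}}(R) < n+2g$ and $R(P_i)=r_i$ for $i=1,\dots,n$. Let $G = X^{q^2}-X\in\mathcal{R}$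 (so $\deg_{\mathcal{H}} G = n$). Let $\Omega\in\mathcal{R}$ be the unique element with $\Omega G = \Lambda(f-R)$. For $t=1,\dots,\ell$ and $i=0,\dots,s-1$ set $A_{t,i} := \binom{t}{i}R^{t-i}G^i$ (which is $0$ if $i>t$), and $$G_t := X^{\lfloor (t(n+2g-1)+\tau)/q\rfloor+1} \text{ for } t=1,\dots,s-1,\qquad G_t := G^s \text{ for } t=s,\dots,\ell.$$ *)

(* Defs.v *)
From HB Require Import structures.
From mathcomp Require Import all_boot all_order all_algebra all_field.
Set Implicit Arguments. Unset Strict Implicit. Unset Printing Implicit Defensive.
Import Order.TTheory GRing.Theory Num.Theory.
Local Open Scope ring_scope.

(* Elements of R = F[X,Y]/(Y^q + Y - X^(q+1)) are represented by bivariate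
   polynomials p : {poly {poly F}}: the OUTER variable is Y, the INNER
   variable (coefficients) is X.  Two representatives denote the same element
   of R iff their difference is divisible by the (Y-monic) Hermitian
   polynomial; the canonical representative is the remainder mod it, which
   lies in the span of {X^i Y^j : 0 <= j < q}. *)

Section Hermitian.
Variable F : fieldType.
Variable q : nat.

Definition hX : {poly {poly F}} := ('X : {poly F})%:P.
Definition hY : {poly {poly F}} := 'X.

Definition hermPoly : {poly {poly F}} := hY ^+ q + hY - hX ^+ q.+1.

Definition hred (p : {poly {poly F}}) : {poly {poly F}} := p %% hermPoly.

Definition heq (p r : {poly {poly F}}) : Prop := hred (p - r) = 0.

Definition hcong (p r g : {poly {poly F}}) : Prop :=
  exists h : {poly {poly F}}, heq (p - r) (g * h).

(* deg_H (p) = -v_{P_oo}(p) = max { i q + j (q+1) : coefficient of X^i Y^j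
   in the canonical representative is nonzero }.  For p = 0 in R this is 0
   (standing for -oo); all bounds below are natural numbers, so
   "deg_H p <= b" is correctly rendered by (degH p <= b)%N. *)
Definition degH (p : {poly {poly F}}) : nat :=
  let r := hred p in
  let c := fun i j : nat => (r`_j)`_i in
  \big[maxn/0%N]_(j < size r)
     \big[maxn/0%N]_(i < size r`_j | c i j != 0) (i * q + j * q.+1)%N.

Definition hevalAt (p : {poly {poly F}}) (a b : F) : F := (p.[b%:P]).[a].

Definition onHerm (a b : F) : bool := b ^+ q + b == a ^+ q.+1.

End Hermitian.

(* Main.v *)
Require Import Defs.
From HB Require Import structures.
From mathcomp Require Import all_boot all_order all_algebra all_field.
From mathcomp Require Import ring zify.
Import Order.TTheory GRing.Theory Num.Theory.
Local Open Scope ring_scope.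
Set Implicit Arguments.

Lemma size_XnsubX (R : nzRingType) n : (1 < n)%N -> size ('X^n - 'X : {poly R}) = n.+1.
Proof.
move=> hn; rewrite size_polyDl size_polyXn //.
by rewrite size_polyN size_polyX ?size_polyXn.
Qed.
Lemma monic_XnsubX (R : nzRingType) n : (1 < n)%N -> ('X^n - 'X : {poly R}) \is monic.
Proof.
move=> hn; rewrite monicE lead_coefDl ?lead_coefXn //.
by rewrite size_polyN size_polyX ?size_polyXn.
Qed.

Section Herm.
Variable F : fieldType.
Variable q : nat.
Hypothesis hq : (1 < q)%N.

Local Notation H := (hermPoly F q).
Local Notation PP := {poly {poly F}}.
Implicit Types a b c d p r : PP.

Lemma hermE : H = 'X^q + ('X - (('X : {poly F}) ^+ q.+1)%:P).
Proof. by rewrite /hermPoly /hY /hX rmorphXn addrA. Qed.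

Lemma size_herm : size H = q.+1.
Proof. by rewrite hermE size_polyDl size_polyXn // size_XsubC. Qed.

Lemma herm_monic : H \is monic.
Proof. by rewrite monicE hermE lead_coefDl ?lead_coefXn // size_polyXn size_XsubC. Qed.

Lemma lc_unit : lead_coef H \is a GRing.unit.
Proof. by rewrite (eqP herm_monic) unitr1. Qed.

Definition cong (a b : PP) := exists k, a - b = k * H.

Lemma cong_refl a : cong a a.
Proof. by exists 0; rewrite subrr mul0r. Qed.

Lemma cong_sym a b : cong a b -> cong b a.
Proof. by case=> k e; exists (-k); rewrite mulNr -e opprB. Qed.

Lemma cong_trans a b c : cong a b -> cong b c -> cong a c.
Proof. by case=> k1 e1 [k2 e2]; exists (k1 + k2); rewrite mulrDl -e1 -e2; ring. Qed.

Lemma cong_add a b c d : cong a b -> cong c d -> cong (a + c) (b + d).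
Proof. by case=> k1 e1 [k2 e2]; exists (k1 + k2); rewrite mulrDl -e1 -e2; ring. Qed.

Lemma cong_opp a b : cong a b -> cong (- a) (- b).
Proof. by case=> k e; exists (-k); rewrite mulNr -e; ring. Qed.

Lemma cong_mul a b c d : cong a b -> cong c d -> cong (a * c) (b * d).
Proof.
case=> k1 /eqP; rewrite subr_eq => /eqP -> [k2 /eqP]; rewrite subr_eq => /eqP ->.
by exists (k1 * (k2 * H + d) + b * k2); ring.
Qed.

Lemma cong_exp a b n : cong a b -> cong (a ^+ n) (b ^+ n).
Proof.
move=> h; elim: n => [|n IH]; first by rewrite !expr0; apply: cong_refl.
by rewrite !exprS; apply: cong_mul.
Qed.

Lemma cong_sum I (r : seq I) (P : pred I) (F1 F2 : I -> PP) :
  (forall i, P i -> cong (F1 i) (F2 i)) ->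
  cong (\sum_(i <- r | P i) F1 i) (\sum_(i <- r | P i) F2 i).
Proof.
move=> h; apply: (big_ind2 cong) => //; first exact: cong_refl.
by move=> *; apply: cong_add.
Qed.

Lemma hred_cong p : cong p (hred q p).
Proof.
exists (p %/ H); rewrite /hred.
by rewrite {1}(Pdiv.IdomainMonic.divp_eq herm_monic p) addrK.
Qed.

Lemma size_hred p : (size (hred q p) < q.+1)%N.
Proof. by rewrite -size_herm /hred ltn_modp monic_neq0 // herm_monic. Qed.

Lemma cong_hred a b : cong a b -> hred q a = hred q b.
Proof.
move=> h; have [k /eqP] := cong_trans h (hred_cong b).
rewrite subr_eq => /eqP e.
by rewrite [LHS]/hred -(Pdiv.IdomainUnit.modpP lc_unit e) // size_herm size_hred.
Qed.

Lemma hred_small p : (size p < q.+1)%N -> hred q p = p.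
Proof. by move=> h; rewrite /hred modp_small // size_herm. Qed.

Lemma heq_cong p r : heq q p r <-> cong p r.
Proof.
split.
- rewrite /heq => h0.
  have [k e] := cong_trans (hred_cong (p - r)) (eq_ind_r (fun x => cong x 0) (cong_refl 0) h0).
  by exists k; rewrite -e subr0.
- case=> k e; rewrite /heq.
  have -> : hred q (p - r) = hred q 0 by apply: cong_hred; exists k; rewrite subr0.
  by rewrite /hred mod0p.
Qed.

Definition w (r : PP) : nat :=
  \big[maxn/0%N]_(j < size r)
     \big[maxn/0%N]_(i < size r`_j | (r`_j)`_i != 0) (i * q + j * q.+1)%N.

Lemma degHE p : degH q p = w (hred q p).
Proof. by []. Qed.

Lemma wP r (b : nat) : reflect (forall i j, (r`_j)`_i != 0 -> (i * q + j * q.+1 <= b)%N)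
                       (w r <= b)%N.
Proof.
apply: (iffP idP).
- move=> /bigmax_leqP H0 i j nz.
  have hj : (j < size r)%N.
    by rewrite ltnNge; apply: contra nz => /leq_sizeP -> //; rewrite coef0.
  have hi : (i < size (r`_j)%R)%N.
    by rewrite ltnNge; apply: contra nz => /leq_sizeP ->.
  by move/bigmax_leqP: (H0 (Ordinal hj) isT) => H1; exact: (H1 (Ordinal hi) nz).
- move=> Hb; apply/bigmax_leqP => j _; apply/bigmax_leqP => i nz; exact: Hb.
Qed.

Lemma w_ge r i j : (r`_j)`_i != 0 -> (i * q + j * q.+1 <= w r)%N.
Proof. by move=> nz; move/wP: (leqnn (w r)); apply. Qed.

Lemma nzD (V : zmodType) (x y : V) : x + y != 0 -> x != 0 \/ y != 0.
Proof. by case: (eqVneq x 0) => [->|]; rewrite ?add0r; [right|left]. Qed.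

Lemma w_add a b : (w (a + b) <= maxn (w a) (w b))%N.
Proof. by apply/wP => i j; rewrite !coefD => /nzD [/w_ge h|/w_ge h]; lia. Qed.

Lemma w_opp a : w (- a) = w a.
Proof.
apply/eqP; rewrite eqn_leq; apply/andP; split; apply/wP => i j.
  by rewrite !coefN oppr_eq0 => /w_ge.
by move=> nz; apply: w_ge; rewrite !coefN oppr_eq0.
Qed.

Lemma w_sub a b : (w (a - b) <= maxn (w a) (w b))%N.
Proof. by rewrite -(w_opp b) w_add. Qed.

Lemma sum_nz (V : zmodType) n (G : 'I_n -> V) :
  \sum_(k < n) G k != 0 -> exists k, G k != 0.
Proof.
move=> h; apply/existsP; apply: contraNT h => /existsPn hn.
by rewrite big1 // => k _; apply/eqP; move: (hn k); rewrite negbK.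
Qed.

Lemma w_mul a b : (w (a * b) <= w a + w b)%N.
Proof.
apply/wP => i j; rewrite coefM coef_sum => /sum_nz [k]; rewrite coefM => /sum_nz [c].
rewrite mulf_eq0 negb_or => /andP [/w_ge h1 /w_ge h2].
have hk := ltn_ord k; have hc := ltn_ord c.
nia.
Qed.

Lemma w_exp a n : (w (a ^+ n) <= n * w a)%N.
Proof.
elim: n => [|n IH].
  rewrite expr0 -polyC1; apply/wP => i j; rewrite coefC.
  case: (j =P 0%N) => [->|_]; last by rewrite coef0 eqxx.
  rewrite coef1; case: (i =P 0%N) => [->|_] //; by rewrite eqxx.
by rewrite exprS; apply: leq_trans (w_mul _ _) _; lia.
Qed.


Lemma red_step p : exists r, [/\ cong r p, (size r < q.+1)%N & (w r <= w p)%N].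
Proof.
move: {2}(size p) (leqnn (size p)) => N; elim: N p => [|N IH] p hs.
  by exists p; split => //; [exact: cong_refl | lia].
case: (ltnP (size p) q.+1) => hsp.
  by exists p; split => //; exact: cong_refl.
set k := (size p).-1.
have hk : size p = k.+1 by rewrite /k; lia.
have hkq : (q <= k)%N by lia.
set c := p`_k.
set p1 := p - c%:P * 'X^k - c%:P * 'X^((k - q).+1) + (c * 'X^(q.+1))%:P * 'X^(k - q).
have hc1 : cong p p1.
  exists (c%:P * 'X^(k - q)); rewrite /p1 hermE.
  have ek : 'X^k = 'X^(k - q) * 'X^q :> PP by rewrite -exprD subnK.
  rewrite ek exprSr rmorphM /=; ring.
have hcoef : forall j, p1`_j = p`_j - (if j == k then c else 0)
     - (if j == (k - q)%N.+1 then c else 0) + (if j == (k - q)%N then c * 'X^(q.+1) else 0).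
  move=> j; rewrite /p1 !coefD !coefN !coefCM !coefXn.
  by rewrite !mulr_natr !mulrb.
have hsz : (size p1 <= k)%N.
  apply/leq_sizeP => j hj; rewrite hcoef.
  have -> : (j == (k - q).+1) = false by apply/negbTE/eqP; lia.
  have -> : (j == (k - q)%N) = false by apply/negbTE/eqP; lia.
  rewrite subr0 addr0.
  case: (eqVneq j k) => [->|hjk]; first by rewrite subrr.
  move/leq_sizeP: (leqnn (size p)) => hz.
  by rewrite hz ?subr0 //; move/eqP: hjk; lia.
have hw : (w p1 <= w p)%N.
  apply/wP => i j; rewrite hcoef.
  case: (eqVneq j k) => [->|hjk].
    have -> : (k == (k - q).+1) = false by apply/negbTE/eqP; lia.
    have -> : (k == (k - q)%N) = false by apply/negbTE/eqP; lia.
    by rewrite subrr !subr0 addr0 coef0 eqxx.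
  case: (eqVneq j (k - q).+1) => [hj1|hj1].
    have -> : (j == (k - q)%N) = false by apply/negbTE/eqP; lia.
    rewrite subr0 addr0 coefB => /nzD [/w_ge //|]; rewrite oppr_eq0 => /w_ge h.
    move/eqP: hjk => hjk; rewrite hj1 in hjk *; nia.
  case: (eqVneq j (k - q)%N) => [hj2|hj2].
    rewrite !subr0 coefD coefMXn => /nzD [/w_ge //|].
    case: ltnP => hi; first by rewrite eqxx.
    move=> /w_ge h; rewrite hj2; nia.
  by rewrite !subr0 addr0 => /w_ge.
have [r [hr1 hr2 hr3]] : exists r, [/\ cong r p1, (size r < q.+1)%N & (w r <= w p1)%N] by apply: IH; lia.
exists r; split => //; first exact: cong_trans hr1 (cong_sym hc1).
exact: leq_trans hr3 hw.
Qed.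

Lemma w_red p : (w (hred q p) <= w p)%N.
Proof.
have [r [hr1 hr2 hr3]] := red_step p.
have <- : hred q r = hred q p by apply: cong_hred.
by rewrite hred_small.
Qed.

Lemma degH_le p p' : cong p p' -> (degH q p <= w p')%N.
Proof. by move=> h; rewrite degHE (cong_hred h); apply: w_red. Qed.

Definition gg : {poly F} := 'X ^+ (q ^ 2) - 'X.

Lemma q2 : (1 < q ^ 2)%N. Proof. by rewrite -[1%N]/(1 ^ 2)%N ltn_exp2r. Qed.

Lemma size_gg : size gg = (q ^ 2).+1.
Proof. exact: (size_XnsubX F _ q2). Qed.

Lemma gg_monic : gg \is monic.
Proof. exact: (monic_XnsubX F _ q2). Qed.

Lemma w_mulG x : (w x <= w (x * gg%:P) - q ^ 3)%N.
Proof.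
apply/wP => i j nz.
have hx : x`_j != 0 by apply: contra nz => /eqP ->; rewrite coef0.
set d := (size x`_j).-1.
have hid : (i <= d)%N.
  rewrite /d; have : (i < size (x`_j)%R)%N.
    by rewrite ltnNge; apply: contra nz => /leq_sizeP ->.
  lia.
have : ((x * gg%:P)`_j)`_(d + q ^ 2) != 0.
  rewrite coefMC.
  have -> : (d + q ^ 2 = (size (x`_j)%R + size gg).-2)%N.
    rewrite size_gg /d; have : (0 < size (x`_j)%R)%N by rewrite size_poly_gt0.
    lia.
  by rewrite -mul_lead_coef (eqP gg_monic) mulr1 lead_coef_eq0.
move/w_ge => h.
have e3 : (q ^ 3 = q ^ 2 * q)%N by rewrite expnS mulnC.
have hiq : (i * q <= d * q)%N by rewrite leq_mul2r hid orbT.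
rewrite mulnDl in h; rewrite e3; lia.
Qed.

Lemma hred_mulG x : hred q (x * gg%:P) = hred q x * gg%:P.
Proof.
rewrite (cong_hred (cong_mul (hred_cong x) (cong_refl gg%:P))) hred_small //.
apply: leq_ltn_trans (size_polyMleq _ _) _.
rewrite size_polyC; apply: leq_ltn_trans _ (size_hred x).
by case: (gg != 0); rewrite ?addn1 ?addn0 /=; [exact: leqnn | exact: leq_pred].
Qed.

End Herm.

Unset Implicit Arguments.

Theorem theorem2 (F : finFieldType) (q : nat)
  (hq1 : (1 < q)%N) (hF : #|F| = (q ^ 2)%N)
  (m l s tau : nat)
  (f Lam Rr Om : {poly {poly F}}) (e : F -> F -> F) :
  let g := ((q * (q - 1)) %/ 2)%N in
  let n := (q ^ 3)%N in
  let G := hX F ^+ (q ^ 2) - hX F in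
  (2 * (g - 1) < m)%N -> (m < n)%N ->
  (1 <= s)%N -> (s <= l)%N ->
  (* f in L(m P_oo) *)
  (degH q f <= m)%N ->
  (* Lam is an error locator: nonzero in R, vanishing at all error positions *)
  ~ heq q Lam 0 ->
  (forall a b : F, onHerm q a b -> e a b != 0 -> hevalAt Lam a b = 0) ->
  (* Rr interpolates the received word r = c + e *)
  (degH q Rr < n + 2 * g)%N ->
  (forall a b : F, onHerm q a b -> hevalAt Rr a b = hevalAt f a b + e a b) ->
  (* Omega G = Lambda (f - R) in R *)
  heq q (Om * G) (Lam * (f - Rr)) ->
  (degH q Lam <= tau)%N ->
  let A := fun t i : nat => ('C(t, i))%:R * Rr ^+ (t - i) * G ^+ i in
  let Gt := fun t : nat =>
    if (t < s)%N then hX F ^+ ((t * (n + 2 * g - 1) + tau) %/ q).+1%N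
    else G ^+ s in
  let Lami := fun i : nat => Lam ^+ (s - i) * Om ^+ i in
  let Psi := fun t : nat => Lam ^+ s * f ^+ t in
  [/\ forall t : nat, (1 <= t <= l)%N ->
        hcong q (\sum_(i < s) Lami i * A t i) (Psi t) (Gt t),
      forall i : nat, (i < s)%N ->
        (degH q (Lami i) <= s * tau + i * (2 * g - 1))%N
    & forall t : nat, (1 <= t <= l)%N ->
        (degH q (Psi t) <= s * tau + t * m)%N].
Proof.
move=> g n G hm1 hm2 hs1 hsl hf hLam _ hRr _ hOm htau A Gt Lami Psi.
have hGE : G = (gg F q)%:P by rewrite /G /gg /hX rmorphB /= rmorphXn.
have hOG : cong q (Om * G) (Lam * (f - Rr)) by apply/(heq_cong q hq1).
have hdOm : (degH q Om <= tau + (2 * g - 1))%N.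
  have h1 : (degH q Om <= degH q (Om * G) - n)%N.
    by rewrite !degHE hGE (hred_mulG q hq1) /n; exact: w_mulG.
  have h2 : degH q (Om * G) = degH q (Lam * (f - Rr)) by rewrite !degHE (cong_hred hq1 hOG).
  have h3 : (degH q (Lam * (f - Rr)) <= degH q Lam + maxn (degH q f) (degH q Rr))%N.
    apply: leq_trans (degH_le hq1 (cong_mul (hred_cong q hq1 Lam)
       (cong_add (hred_cong q hq1 f) (cong_opp (hred_cong q hq1 Rr))))) _.
    apply: leq_trans (w_mul q hq1 _ _) _.
    by rewrite !degHE; apply: leq_add => //; exact: w_sub.
  lia.
split.
- move=> t /andP [ht1 htl].
  set D := f - Rr.
  pose T := fun i : nat => 'C(t, i)%:R * Rr ^+ (t - i) * D ^+ i.
  have hS : cong q (\sum_(i < s) Lami i * A t i) (Lam ^+ s * \sum_(i < s) T i).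
    rewrite mulr_sumr; apply: cong_sum => i _.
    have hi : (i <= s)%N by apply: ltnW.
    have -> : Lami i * A t i = ('C(t, i)%:R * Rr ^+ (t - i) * Lam ^+ (s - i)) * (Om * G) ^+ i.
      by rewrite /Lami /A exprMn; ring.
    have -> : Lam ^+ s * T i = ('C(t, i)%:R * Rr ^+ (t - i) * Lam ^+ (s - i)) * (Lam * D) ^+ i.
      by rewrite /T exprMn -{1}(subnK hi) exprD; ring.
    exact: cong_mul (cong_refl _ _) (cong_exp _ hOG).
  have hfT : f ^+ t = \sum_(i < t.+1) T i.
    rewrite -{1}(subrK Rr f) -/D addrC exprDn; apply: eq_bigr => i _.
    by rewrite /T -mulrA mulr_natl.
  rewrite /Gt; case: ltnP => hts.
  + exists 0; apply/(heq_cong q hq1); rewrite mulr0.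
    have ee : \sum_(i < s) T i = \sum_(i < t.+1) T i.
      rewrite -!(big_mkord predT T) (@big_cat_nat _ _ _ t.+1) //=.
      rewrite [X in _ + X]big1_seq ?addr0 // => i /andP [_]; rewrite mem_index_iota => /andP [hi _].
      by rewrite /T bin_small // !mul0r.
    rewrite ee -hfT in hS.
    by have [k hk] := hS; exists k; rewrite subr0 hk.
  + have ee : \sum_(i < t.+1) T i = \sum_(i < s) T i + \sum_(s <= i < t.+1) T i.
      by rewrite -!(big_mkord predT T) (@big_cat_nat _ _ _ s) //; apply: leqW.
    set Y := \sum_(s <= i < t.+1) 'C(t, i)%:R * Rr ^+ (t - i) * D ^+ (i - s).
    have eY : Lam ^+ s * \sum_(s <= i < t.+1) T i = (Lam * D) ^+ s * Y.
      rewrite exprMn -mulrA; congr (_ * _); rewrite /Y !mulr_sumr.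
      apply: eq_big_nat => i /andP [hi _]; rewrite /T.
      have -> : D ^+ i = D ^+ (i - s) * D ^+ s by rewrite -exprD subnK.
      by ring.
    have hP : Psi t = Lam ^+ s * \sum_(i < s) T i + (Lam * D) ^+ s * Y.
      by rewrite /Psi hfT ee mulrDr eY.
    exists (- (Om ^+ s * Y)); apply/(heq_cong q hq1).
    have -> : G ^+ s * - (Om ^+ s * Y) = - ((Om * G) ^+ s * Y) by rewrite exprMn; ring.
    rewrite hP.
    have h2 : cong q (\sum_(i < s) Lami i * A t i - (Lam ^+ s * \sum_(i < s) T i + (Lam * D) ^+ s * Y))
                   (Lam ^+ s * \sum_(i < s) T i - (Lam ^+ s * \sum_(i < s) T i + (Om * G) ^+ s * Y)).
      apply: (cong_add hS (cong_opp (cong_add (cong_refl _ _) _))).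
      exact: (cong_mul (cong_exp s (cong_sym hOG)) (cong_refl _ _)).
    apply: (cong_trans h2); rewrite opprD addrA subrr add0r; exact: cong_refl.
- move=> i hi.
  apply: leq_trans (degH_le hq1 (cong_mul (cong_exp (s - i) (hred_cong q hq1 Lam))
       (cong_exp i (hred_cong q hq1 Om)))) _.
  apply: leq_trans (w_mul q hq1 _ _) _.
  have a1 := w_exp q hq1 (hred q Lam) (s - i); have a2 := w_exp q hq1 (hred q Om) i.
  rewrite -!degHE in a1 a2.
  have b1 : ((s - i) * degH q Lam <= (s - i) * tau)%N by rewrite leq_mul2l htau orbT.
  have b2 : (i * degH q Om <= i * (tau + (2 * g - 1)))%N by rewrite leq_mul2l hdOm orbT.
  have ee : ((s - i) * tau + i * (tau + (2 * g - 1)) = s * tau + i * (2 * g - 1))%N.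
    by rewrite mulnDr addnA -mulnDl subnK // ltnW.
  lia.
- move=> t /andP [ht1 htl].
  apply: leq_trans (degH_le hq1 (cong_mul (cong_exp s (hred_cong q hq1 Lam))
       (cong_exp t (hred_cong q hq1 f)))) _.
  apply: leq_trans (w_mul q hq1 _ _) _.
  have a1 := w_exp q hq1 (hred q Lam) s; have a2 := w_exp q hq1 (hred q f) t.
  rewrite -!degHE in a1 a2.
  have b1 : (s * degH q Lam <= s * tau)%N by rewrite leq_mul2l htau orbT.
  have b2 : (t * degH q f <= t * m)%N by rewrite leq_mul2l hf orbT.
  lia.
Qed.
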